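(* Let $\Bbbk$ be an algebraically closed field of characteristic $0$, let $\mathfrak q$ be a finite-dimensional Lie algebra over $\Bbbk$, and let $\vartheta\in\mathrm{Aut}(\mathfrak q)$ be an automorphism of finite order $m\ge 1$ with fixed-point subalgebra $\mathfrak q_0=\mathfrak q^\vartheta$. Let $n\ge 1$, $\mathfrak r=\mathfrak q^{\oplus n}$, and let $\tilde\vartheta\in\mathrm{Aut}(\mathfrak r)$ be defined by $\tilde\vartheta(y_1,y_2,\ldots,y_n)=(y_n,\vartheta(y_1),y_2,\ldots,y_{n-1})$. Suppose that $\mathfrak q_0^*\cap\mathfrak q^*_{\mathsf{reg}}\neq\varnothing$. Then $\mathfrak r_0^*\cap\mathfrak r^*_{\mathsf{reg}}\neq\varnothing$.
   Context: Fix a primitive $m$-th root of unity $\zeta$; $\mathfrak q_i$ ($i=0,\dots,m-1$) is the $\zeta^i$-eigenspace of $\vartheta$, so $\mathfrak q=\bigoplus_i\mathfrak q_i$. The space $\mathfrak q_0^*$ is identified with the annihilator of $\bigoplus_{i=1}^{m-1}\mathfrak q_i$ in $\mathfrak q^*$. Similarly $\mathfrak r_0=\mathfrak r^{\tilde\vartheta}$ and $\mathfrak r_0^*$ denotes the annihilator in $\mathfrak r^*$ of the sum of all eigenspaces of $\tilde\vartheta$ with eigenvalue $\neq 1$. For a finite-dimensional Lie algebra $\mathfrak a$ and $\xi\in\mathfrak a^*$, $\mathfrak a^\xi=\{x\in\mathfrak a: \mathrm{ad}^*(x)\xi=0\}$; the index is $\mathrm{ind}\,\mathfrak a=\min_{\xi\in\mathfrak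 a^*}\dim\mathfrak a^\xi$, and $\mathfrak a^*_{\mathsf{reg}}=\{\xi\in\mathfrak a^*:\dim\mathfrak a^\xi=\mathrm{ind}\,\mathfrak a\}$. *)

(* Defs.v *)
From HB Require Import structures.
From mathcomp Require Import all_boot all_order all_algebra vector.
Set Implicit Arguments. Unset Strict Implicit. Unset Printing Implicit Defensive.
Import GRing.Theory.
Local Open Scope ring_scope.

Definition is_lie_bracket (K : fieldType) (V : vectType K) (br : V -> V -> V) : Prop :=
  [/\ (forall (a : K) (x y z : V), br (a *: x + y) z = a *: br x z + br y z),
      (forall (a : K) (x y z : V), br z (a *: x + y) = a *: br z x + br z y),
      (forall x : V, br x x = 0) &
      (forall x y z : V, br x (br y z) + br y (br z x) + br z (br x y) = 0)].

Definition is_lie_aut (K : fieldType) (V : vectType K) (br : V -> V -> V)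
    (th : 'End(V)) : Prop :=
  (lker th == 0)%VS /\ forall x y : V, th (br x y) = br (th x) (th y).

Definition has_order (K : fieldType) (V : vectType K) (th : 'End(V)) (m : nat) : Prop :=
  [/\ (0 < m)%N,
      (forall x : V, iter m th x = x) &
      (forall k : nat, (0 < k < m)%N -> exists x : V, iter k th x != x)].


Definition stab (K : fieldType) (V : vectType K) (br : V -> V -> V)
    (xi : 'Hom(V, K^o)) : {vspace V} :=
  lker (linfun (fun x : V => linfun (fun y : V => (xi (br x y) : K^o)))).

Definition dual_reg (K : fieldType) (V : vectType K) (br : V -> V -> V)
    (xi : 'Hom(V, K^o)) : Prop :=
  forall eta : 'Hom(V, K^o), (\dim (stab br xi) <= \dim (stab br eta))%N.

(* q_0^*: the annihilator of the sum of the eigenspaces q_i = ker(th - zeta^i),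
   i = 1, ..., m-1 (zeta a primitive m-th root of unity). *)
Definition in_q0_dual (K : fieldType) (V : vectType K) (th : 'End(V)) (m : nat)
    (zeta : K) (xi : 'Hom(V, K^o)) : Prop :=
  forall i : nat, (0 < i < m)%N ->
    forall x : V, x \in passmx.leigenspace th (zeta ^+ i) -> xi x = 0.

(* r_0^*: annihilator of the sum of all eigenspaces of th with eigenvalue != 1. *)
Definition in_fixed_dual (K : fieldType) (V : vectType K) (th : 'End(V))
    (xi : 'Hom(V, K^o)) : Prop :=
  forall a : K, a != 1 -> forall x : V, x \in passmx.leigenspace th a -> xi x = 0.

(* r = q^{(+) n.+1}, realised as finite functions 'I_n.+1 -> V. *)
Definition sum_bracket (K : fieldType) (V : vectType K) (br : V -> V -> V) (n : nat)
    (y z : {ffun 'I_n.+1 -> V}) : {ffun 'I_n.+1 -> V} :=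
  [ffun j => br (y j) (z j)].

(* tilde theta (y_1, ..., y_N) = (y_N, th y_1, y_2, ..., y_{N-1}), N = n.+1;
   0-indexed: component j is y_{j-1 mod N}, with th applied iff j = 1 mod N
   (for N = 1 this is just th). *)
Definition cyc_aut_fun (K : fieldType) (V : vectType K) (th : 'End(V)) (n : nat)
    (y : {ffun 'I_n.+1 -> V}) : {ffun 'I_n.+1 -> V} :=
  [ffun j : 'I_n.+1 =>
     if val j == (1 %% n.+1)%N then th (y (ord_pred j)) else y (ord_pred j)].

Definition cyc_aut (K : fieldType) (V : vectType K) (th : 'End(V)) (n : nat)
  : 'End({ffun 'I_n.+1 -> V}) := linfun (cyc_aut_fun th (n:=n)).

(* Main.v *)
Require Import Defs.
From HB Require Import structures.
From mathcomp Require Import all_boot all_order all_algebra vector zify.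
Import GRing.Theory.
Local Open Scope ring_scope.

Lemma linfunE' (K : fieldType) (aT rT : vectType K) (f : aT -> rT) :
  linear f -> linfun f =1 f.
Proof.
move=> lf.
pose F : {linear aT -> rT} := HB.pack f (GRing.isLinear.Build K aT rT *:%R f lf).
exact: (lfunE F).
Qed.

Definition bil (K : fieldType) (V : vectType K) (br : V -> V -> V) : Prop :=
  (forall (a : K) (x y z : V), br (a *: x + y) z = a *: br x z + br y z) /\
  (forall (a : K) (x y z : V), br z (a *: x + y) = a *: br z x + br z y).

Arguments bil {K V}.

Lemma bil_r0 (K : fieldType) (V : vectType K) (br : V -> V -> V) :
  bil br -> forall z, br z 0 = 0.
Proof.
move=> [_ hr] z; have := hr 1 0 0 z; rewrite !scale1r addr0 => h.
by apply/eqP; rewrite -(addrI (br z 0) (etrans (addr0 _) h)).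
Qed.

Lemma stabP (K : fieldType) (V : vectType K) (br : V -> V -> V) (hb : bil br)
  (xi : 'Hom(V, K^o)) v : v \in stab br xi <-> forall y, xi (br v y) = 0.
Proof.
case: hb => hl hr.
have lin_in x : linear (fun y : V => (xi (br x y) : K^o)).
  by move=> a y z; rewrite hr linearP.
rewrite /stab memv_ker linfunE'; last first.
  move=> a x y; apply/lfunP => z; rewrite !lfun_simp /=.
  rewrite !linfunE' // hl linearP.
  done.
rewrite /=; split.
  by move=> /eqP/lfunP h y; have := h y; rewrite linfunE' // zero_lfunE.
by move=> h; apply/eqP/lfunP => y; rewrite linfunE' // zero_lfunE.
Qed.
Arguments bil_r0 {K V br}.
Arguments stabP {K V br} hb {xi v}.
Section S.
Context (K : fieldType) (V : vectType K) (n : nat).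
Local Notation R := {ffun 'I_n.+1 -> V}.

Definition dl (j : 'I_n.+1) : 'Hom(V, R) :=
  linfun (fun v : V => [ffun k : 'I_n.+1 => if k == j then v else 0] : R).

Lemma dlE j v k : dl j v k = if k == j then v else 0.
Proof.
rewrite /dl linfunE' ?ffunE //.
move=> a x y; apply/ffunP => i; rewrite !ffunE.
by case: ifP => _ //; rewrite scaler0 addr0.
Qed.

Lemma dl_inj j : injective (dl j).
Proof. by move=> x y /ffunP /(_ j); rewrite !dlE eqxx. Qed.

Definition bigxi (xi : 'Hom(V, K^o)) : 'Hom(R, K^o) :=
  linfun (fun y : R => \sum_j (xi (y j) : K^o)).

Lemma bigxiE xi y : bigxi xi y = \sum_j xi (y j).
Proof.
rewrite /bigxi linfunE' //.
move=> a x z; rewrite scaler_sumr -big_split /=; apply: eq_bigr => j _.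
by rewrite !ffunE linearP.
Qed.

Lemma sb_bil br : bil br -> @bil K R (sum_bracket br (n:=n)).
Proof.
case=> hl hr; split=> a x y z; apply/ffunP => k; rewrite !ffunE.
  by rewrite hl.
by rewrite hr.
Qed.

Lemma ffun_decomp (y : R) : y = \sum_j dl j (y j).
Proof.
apply/ffunP => k; rewrite sum_ffunE (bigD1 k) //= big1 ?addr0.
  by rewrite dlE eqxx.
by move=> j /negPf hj; rewrite dlE eq_sym hj.
Qed.

Lemma reg_lift br (hb : bil br) xi :
  dual_reg br xi -> dual_reg (sum_bracket br (n:=n)) (bigxi xi).
Proof.
move=> hreg eta.
have hsb := sb_bil _ hb.
have r0 := bil_r0 hb.
have dim_dl j (U : {vspace V}) : \dim (dl j @: U) = \dim U.
  apply: limg_dim_eq; apply/eqP; rewrite -subv0; apply/subvP => v.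
  rewrite memv_cap memv0 => /andP[_]; rewrite memv_ker => /eqP.
  by rewrite -(linear0 (dl j)) => /dl_inj ->.
apply: (@leq_trans (\sum_(j < n.+1) \dim (stab br xi))).
  apply: (@leq_trans (\dim (\sum_j (dl j @: stab br xi)))).
    apply: dimvS; apply/subvP => y /(stabP hsb) hy.
    rewrite [y]ffun_decomp; apply: memv_sumr => j _; apply: memv_img.
    apply/(stabP hb) => z.
    have := hy (dl j z); rewrite bigxiE (bigD1 j) //= big1 ?addr0.
      by rewrite ffunE dlE eqxx.
    by move=> k /negPf hk; rewrite ffunE dlE hk r0 linear0.
  apply: leq_trans (dimv_leq_sum _ _ _) _.
  by rewrite leq_eqVlt; apply/orP; left; apply/eqP; apply: eq_bigr => j _; rewrite dim_dl.
pose etaj j := (eta \o dl j)%VF.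
apply: (@leq_trans (\sum_(j < n.+1) \dim (stab br (etaj j)))).
  by apply: leq_sum => j _; apply: hreg.
have dx : directv (\sum_j (dl j @: stab br (etaj j))).
  apply/directv_sum_independent => us hus hsum i _.
  have hz j k : k != j -> us j k = 0.
    by case/memv_imgP: (hus j isT) => u _ -> /negPf hk; rewrite dlE hk.
  apply/ffunP => k; rewrite ffunE.
  case: (eqVneq k i) => [->|hki]; last exact: hz.
  have := congr1 (fun f : R => f i) hsum; rewrite /= sum_ffunE ffunE (bigD1 i) //=.
  by rewrite big1 ?addr0 // => j hj; apply: hz; rewrite eq_sym.
move/directvP: dx => /= hd.
rewrite (eq_bigr (fun j => \dim (dl j @: stab br (etaj j)))); last by move=> j _; rewrite dim_dl.
rewrite -hd; apply: dimvS; apply/subv_sumP => j _; apply/subvP => y /memv_imgP[v hv ->].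
apply/(stabP hsb) => w.
have -> : sum_bracket br (dl j v) w = dl j (br v (w j)).
  apply/ffunP => k; rewrite !ffunE !dlE; case: eqP => [->|_] //.
  by have := hb.1 1 0 0 (w k); rewrite !scale1r addr0 => h; apply/eqP; rewrite -(addrI _ (etrans (addr0 _) h)).
by have := (stabP hb).1 hv (w j); rewrite comp_lfunE.
Qed.
End S.
Lemma eigenP (K : fieldType) (V : vectType K) (th : 'End(V)) a x :
  x \in passmx.leigenspace th a <-> th x = a *: x.
Proof.
rewrite /passmx.leigenspace memv_ker !lfun_simp /=.
rewrite subr_eq0.
by split=> /eqP.
Qed.

Lemma xi_inv (K : fieldType) (hK : [pchar K] =i pred0) (V : vectType K)
  (th : 'End(V)) (m : nat) (hm : has_order th m) (zeta : K)
  (hzeta : m.-primitive_root zeta) (xi : 'Hom(V, K^o)) :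
  in_q0_dual th m zeta xi -> forall x, xi (th x) = xi x.
Proof.
move=> hq x.
case: hm => m0 hid _.
have zm : zeta ^+ m = 1 by apply: prim_expr_order.
have [m' Em] : exists m', m = m'.+1 by case: (m) m0 => [|k] //; exists k.
pose e (i : nat) := (m%:R)^-1 *: \sum_(k < m) (zeta ^+ (i * k)) *: iter k th x.
have he i : zeta ^+ i *: th (e i) = e i.
  rewrite /e linearZ /= scalerA mulrC -scalerA; congr (_ *: _).
  rewrite linear_sum scaler_sumr /=.
  rewrite Em; rewrite Em in hid zm.
  rewrite [RHS]big_ord_recl big_ord_recr /= addrC; congr (_ + _).
    rewrite linearZ /= scalerA -exprD -mulnS.
    by rewrite -iterS hid mulnC exprM zm expr1n muln0 expr0 /=.
  apply: eq_bigr => k _; rewrite linearZ /= scalerA -exprD -mulnS /bump /=.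
  by rewrite -iterS.
have hsum : \sum_(i < m) e i = x.
  rewrite /e -scaler_sumr exchange_big /=.
  rewrite (eq_bigr (fun k : 'I_m => (\sum_(i < m) zeta ^+ (i * k)) *: iter k th x)); last first.
    by move=> k _; rewrite scaler_suml.
  rewrite Em big_ord_recl /= [X in _ + X]big1 ?addr0.
    rewrite (eq_bigr (fun _ => 1)); last by move=> i _; rewrite muln0 expr0.
    rewrite sumr_const card_ord -Em scalerA mulVf ?scale1r //.
    by move/pcharf0P: hK => ->; rewrite Em.
  move=> k _; rewrite /bump add1n.
  set z := zeta ^+ k.+1.
  have -> : \sum_(i < m'.+1) zeta ^+ (i * k.+1) = \sum_(i < m'.+1) z ^+ i.
    by apply: eq_bigr => i _; rewrite /z -exprM mulnC.
  have hz1 : z != 1.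
    rewrite /z -(expr0 zeta) (eq_prim_root_expr hzeta) Em mod0n modn_small //.
    by rewrite ltnS ltn_ord.
  have : z ^+ m'.+1 - 1 = 0 by rewrite /z -exprM mulnC exprM -Em zm expr1n subrr.
  rewrite subrX1 => /eqP; rewrite mulf_eq0 subr_eq0 (negPf hz1) /= => /eqP ->.
  by rewrite scale0r.
have hxi i : (i < m)%N -> xi (th (e i)) = xi (e i).
  move=> him; case: (posnP i) => [->|ip].
    by have := he 0%N; rewrite expr0 scale1r => ->.
  have hth : th (e i) = zeta ^+ (m - i) *: e i.
    by rewrite -[in RHS](he i) scalerA -exprD subnK ?zm ?scale1r // ltnW.
  have h0 : xi (e i) = 0.
    have hmi : (0 < m - i < m)%N by apply/andP; split; lia.
    apply: (hq (m - i)%N hmi (e i)).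
    by apply/eigenP.
  by rewrite hth linearZ /= h0 ?mulr0 ?scaler0.
rewrite -{1 2}hsum linear_sum /= linear_sum /=.
rewrite linear_sum /=.
by apply: eq_bigr => i _; apply: hxi.
Qed.

Lemma cycE (K : fieldType) (V : vectType K) (th : 'End(V)) (n : nat) y :
  cyc_aut th n y = cyc_aut_fun th y.
Proof.
rewrite /cyc_aut linfunE' //.
move=> a x z; apply/ffunP => j; rewrite !ffunE.
by case: ifP => _; rewrite ?linearP.
Qed.

Theorem lemma2p1 (K : closedFieldType) (hK : [pchar K] =i pred0)
    (V : vectType K) (br : V -> V -> V) (hbr : is_lie_bracket br)
    (th : 'End(V)) (hth : is_lie_aut br th) (m : nat) (hm : has_order th m)
    (zeta : K) (hzeta : m.-primitive_root zeta) (n : nat)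
    (hq : exists xi : 'Hom(V, K^o), in_q0_dual th m zeta xi /\ dual_reg br xi) :
  exists xi : 'Hom({ffun 'I_n.+1 -> V}, K^o),
    in_fixed_dual (cyc_aut th n) xi /\ dual_reg (sum_bracket br (n:=n)) xi.
Proof.
case: hq => xi [hq0 hreg].
have hb : bil br by case: hbr => hl hr _ _; split.
exists (bigxi _ _ n xi); split; last exact: reg_lift.
move=> a ha1 x /eigenP hx.
have inv := @xi_inv _ hK _ _ _ hm _ hzeta _ hq0.
have e1 : bigxi _ _ n xi (cyc_aut th n x) = bigxi _ _ n xi x.
  rewrite cycE !bigxiE [RHS](reindex_inj (@ord_pred_inj _)) /=.
  apply: eq_bigr => j _; rewrite ffunE.
  by case: ifP => _; rewrite ?inv.
move: e1; rewrite hx linearZ /= => /eqP.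
rewrite -subr_eq0 -{2}(mul1r (bigxi _ _ n xi x)) -mulrBl mulf_eq0 subr_eq0 (negPf ha1) /=.
by move/eqP.
Qed.
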